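(* Let $\Gamma$ be the semigroup associated to an irreducible plane curve singularity, minimally generated by $r_0<\cdots<r_h$, with conductor $c$. If $h\ge 2$, then $h\le \log_2\!\left(\frac{\sqrt{60c+1}+9}{10}\right)$.
   Context: A numerical semigroup is a submonoid of $(\mathbb N,+)$ with finite complement in $\mathbb N$; it has a unique minimal generating system. The conductor is $c=\mathrm F(\Gamma)+1$, where $\mathrm F(\Gamma)$ is the largest integer not in $\Gamma$. $\langle X\rangle$ is the submonoid generated by $X$. For an arrangement $(r_0,\ldots,r_h)$ of the minimal generators, set $d_k=\gcd(r_0,\ldots,r_{k-1})$ and $e_k=d_k/d_{k+1}$. A set $A$ of positive integers with nontrivial partition $A=A_1\cup A_2$ is the gluing of $A_1$ and $A_2$ if $\mathrm{lcm}(\gcd A_1,\gcd A_2)\in\langle A_1\rangle\cap\langle A_2\rangle$. $\Gamma$ is free for $(r_0,\ldots,r_h)$ if $h=0$, or $h\ge1$, $\{r_0,\ldots,r_h\}$ is the gluing of $\{r_0,\ldots,r_{h-1}\}$ and $\{r_h\}$, and $\langle r_0/d_h,\ldots,r_{h-1}/d_h\rangle$ is free for $(r_0/d_h,\ldots,r_{h-1}/d_h)$. $\Gamma$ is telescopic if it is free for the increasing arrangement $r_0<\cdots<r_h$. $\Gamma$ is the semigroup associated to an irreducible plane curve singularity if it is telescopic and $e_kr_k<r_{k+1}$ for all $k=1,\ldots,h-1$. *)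

(* Defs.v *)
From mathcomp Require Import all_boot.
From Stdlib Require Import Reals.

Set Implicit Arguments.
Unset Strict Implicit.
Unset Printing Implicit Defensive.

Inductive gen (X : seq nat) : nat -> Prop :=
| gen0 : gen X 0
| genS x n : x \in X -> gen X n -> gen X (x + n).

Definition numerical_semigroup (G : nat -> Prop) : Prop :=
  [/\ G 0, (forall m n, G m -> G n -> G (m + n))
    & exists N, forall n, N <= n -> G n].

Definition minimal_generating_system (G : nat -> Prop) (r : seq nat) : Prop :=
  [/\ forall n, G n <-> gen r n,
      uniq r,
      all (fun x => 0 < x) r
    & forall x, x \in r -> ~ gen (rem x r) x].

Definition is_conductor (G : nat -> Prop) (c : nat) : Prop :=
  (forall n, c <= n -> G n) /\
  (forall c', (forall n, c' <= n -> G n) -> c <= c').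

Definition gcd_seq (s : seq nat) : nat := foldr gcdn 0 s.

Definition gluing (A1 A2 : seq nat) : Prop :=
  [/\ A1 != [::], A2 != [::], [predI A1 & A2] =1 pred0
    & gen A1 (lcmn (gcd_seq A1) (gcd_seq A2)) /\
      gen A2 (lcmn (gcd_seq A1) (gcd_seq A2))].

(* Recursive definition as in the paper: h = 0, or
   {r_0..r_h} is the gluing of {r_0..r_(h-1)} and {r_h}, and
   <r_0/d_h, ..., r_(h-1)/d_h> is free for (r_0/d_h, ..., r_(h-1)/d_h). *)
Inductive free : seq nat -> Prop :=
| free0 x : free [:: x]
| freeS s x : gluing s [:: x] ->
    free (map (fun y => y %/ gcd_seq s) s) -> free (rcons s x).

Definition dk (r : seq nat) (k : nat) : nat := gcd_seq (take k r).
Definition ek (r : seq nat) (k : nat) : nat := dk r k %/ dk r k.+1.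

Definition telescopic (r : seq nat) : Prop := sorted ltn r /\ free r.

(* semigroup of an irreducible plane curve singularity, in terms of its
   increasingly listed minimal generators r = (r_0, ..., r_h) *)
Definition plane_curve_gens (r : seq nat) : Prop :=
  telescopic r /\
  (forall k, 1 <= k -> k <= (size r).-1 - 1 ->
     ek r k * nth 0 r k < nth 0 r k.+1).

(* Main.v *)
Require Import Defs.
From mathcomp Require Import all_boot.
From Stdlib Require Import Reals.
From mathcomp Require Import zify.
From Stdlib Require Import Lra.


Lemma gcd_seq_cat s t : gcd_seq (s ++ t) = gcdn (gcd_seq s) (gcd_seq t).
Proof. elim: s => [|a s IH] /=; first by rewrite gcdnC gcdn0 /=. by rewrite IH gcdnA. Qed.

Lemma gcd_seq_rcons s x : gcd_seq (rcons s x) = gcdn (gcd_seq s) x.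
Proof. by rewrite -cats1 gcd_seq_cat /= gcdn0. Qed.

Lemma gcd_seq_dvd s x : x \in s -> gcd_seq s %| x.
Proof.
elim: s => [|a s IH] //=; rewrite in_cons => /orP [/eqP ->|H].
  exact: dvdn_gcdl.
exact: dvdn_trans (dvdn_gcdr _ _) (IH H).
Qed.

Lemma gen_dvd X n : gen X n -> gcd_seq X %| n.
Proof. elim => [|x m Hx _ IH]; first exact: dvdn0. by rewrite dvdn_addr // gcd_seq_dvd. Qed.

Lemma gen_add X a b : gen X a -> gen X b -> gen X (a + b).
Proof. elim => [|x m Hx _ IH] Hb //=. rewrite -addnA. by apply: genS => //; apply: IH. Qed.

Lemma gen_mul X q a : gen X a -> gen X (q * a).
Proof. move=> Ha; elim: q => [|q IH]; first exact: gen0. by rewrite mulSn; apply: gen_add. Qed.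

Lemma gen_mono X Y n : (forall x, x \in X -> x \in Y) -> gen X n -> gen Y n.
Proof. move=> HXY; elim => [|x m Hx _ IH]; first exact: gen0. by apply: genS => //; apply: HXY. Qed.

Lemma gen_mem X x : x \in X -> gen X x.
Proof. by move=> H; rewrite -[x]addn0; apply: genS => //; apply: gen0. Qed.

Lemma gen_rcons_inv X y n : gen (rcons X y) n -> exists m mu, gen X m /\ n = m + mu * y.
Proof.
elim => [|x m Hx _ [m' [mu [Hm' ->]]]]; first by exists 0, 0; split => //; apply: gen0.
move: Hx; rewrite mem_rcons in_cons => /orP [/eqP ->|Hx].
  by exists m', mu.+1; split => //; rewrite mulSn; lia.
exists (x + m'), mu; split; first exact: genS.
by rewrite addnA.
Qed.

Lemma gen_scale X d n : gen X n -> gen (map (muln d) X) (d * n).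
Proof.
elim => [|x m Hx _ IH]; first by rewrite muln0; apply: gen0.
rewrite mulnDr; apply: genS => //; exact: map_f.
Qed.

Lemma dvd_gcd_seq d t : (forall y, y \in t -> d %| y) -> d %| gcd_seq t.
Proof.
elim: t => [|b t IHt] H /=; first exact: dvdn0.
rewrite dvdn_gcd H ?in_cons ?eqxx //= IHt // => y Hy; apply: H; rewrite in_cons Hy orbT //.
Qed.

Lemma gcd_seq_map_div d t : 0 < d -> (forall y, y \in t -> d %| y) ->
  gcd_seq (map (fun y => y %/ d) t) = gcd_seq t %/ d.
Proof.
move=> d0; elim: t => [|a t IH] H /=; first by rewrite div0n.
rewrite IH; last by move=> y Hy; apply: H; rewrite in_cons Hy orbT.
have Ha : d %| a by apply: H; rewrite in_cons eqxx.
have Ht : d %| gcd_seq t.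
  by apply: dvd_gcd_seq => y Hy; apply: H; rewrite in_cons Hy orbT.
apply/eqP; rewrite -(eqn_pmul2r d0) muln_gcdl !divnK //.
by rewrite dvdn_gcd Ha.
Qed.

Lemma free_lcm s0 : free s0 -> all (fun x => 0 < x) s0 -> forall k, k < size s0 ->
  gen (take k s0) (lcmn (gcd_seq (take k s0)) (nth 0 s0 k)).
Proof.
elim => [x|s x [Hs _ _ [Hgl _]] Hf IH] Hpos k.
  by case: k => // _; rewrite /= lcm0n; apply: gen0.
have Hps : all (fun x => 0 < x) s by move: Hpos; rewrite -cats1 all_cat => /andP [].
set d := gcd_seq s.
have Hdv : forall y, y \in s -> d %| y by move=> y; apply: gcd_seq_dvd.
have d0 : 0 < d.
  case: s Hs Hps {Hdv Hf IH Hgl Hpos} @d => [|y t] //= _ /andP [Hy _].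
  by rewrite gcdn_gt0 Hy.
rewrite size_rcons ltnS leq_eqVlt => /orP [/eqP ->|Hk].
  rewrite -cats1 take_size_cat // nth_cat ltnn subnn /=.
  by move: Hgl; rewrite /= gcdn0.
rewrite -cats1 takel_cat ?(ltnW Hk) // nth_cat Hk.
have Hpos' : all (fun x => 0 < x) (map (fun y => y %/ d) s).
  rewrite all_map; apply/allP => y Hy /=; rewrite divn_gt0 //.
  by apply: dvdn_leq; [exact: (allP Hps y Hy) | exact: Hdv].
have := IH Hpos' k; rewrite size_map => /(_ Hk).
rewrite -map_take (nth_map 0) // gcd_seq_map_div //; last first.
  by move=> y Hy; apply: Hdv; exact: mem_take Hy.
move/(@gen_scale _ d).
have -> : map (muln d) (map (fun y => y %/ d) (take k s)) = take k s.
  rewrite -map_comp map_id_in // => y Hy /=.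
  by rewrite mulnC divnK //; apply: Hdv; exact: mem_take Hy.
rewrite mulnC muln_lcml !divnK //; first by apply: Hdv; exact: mem_nth.
by apply: dvd_gcd_seq => y Hy; apply: Hdv; exact: mem_take Hy.
Qed.

Lemma mod_cancel D R mu b : 0 < D -> b < D %/ gcdn D R ->
  mu * R = b * R %[mod D] -> mu %% (D %/ gcdn D R) = b.
Proof.
move=> D0 HbE Hmod.
set g := gcdn D R in HbE *; set E := D %/ g in HbE *.
have g0 : 0 < g by rewrite gcdn_gt0 D0.
have HD : D = E * g by rewrite divnK // dvdn_gcdl.
have HR : R = R %/ g * g by rewrite divnK // dvdn_gcdr.
set R' := R %/ g in HR.
have cop : coprime E R'.
  rewrite /coprime; apply/eqP.
  have : gcdn E R' * g = g by rewrite muln_gcdl -HD -HR.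
  by move/eqP; rewrite -{2}[g]mul1n eqn_pmul2r // => /eqP.
have E0 : 0 < E by lia.
have key : forall x y, y <= x -> x < E -> x * R = y * R %[mod D] -> x = y.
  move=> x y Hyx HxE /eqP; rewrite eqn_mod_dvd ?leq_mul2r ?Hyx ?orbT // -mulnBl.
  rewrite {1}HD HR mulnA dvdn_pmul2r // Gauss_dvdl // => Hd.
  case: (posnP (x - y)) => [|Hp]; first by lia.
  by have := dvdn_leq Hp Hd; lia.
have Hm : mu * R = (mu %% E) * R %[mod D].
  rewrite {1}(divn_eq mu E) mulnDl.
  have -> : mu %/ E * E * R = (mu %/ E * R') * D by rewrite HD {1}HR; nia.
  by rewrite modnMDl.
have Hxy : mu %% E * R = b * R %[mod D] by rewrite -Hm.
have HxE : mu %% E < E by rewrite ltn_mod.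
case: (leqP b (mu %% E)) => H.
  exact: key.
by apply/esym; apply: key; [exact: ltnW | exact: HbE | rewrite Hxy].
Qed.

Lemma dkS r k : k < size r -> dk r k.+1 = gcdn (dk r k) (nth 0 r k).
Proof. by move=> Hk; rewrite /dk (take_nth 0 Hk) gcd_seq_rcons. Qed.

Lemma dk_pos r k : all (fun x => 0 < x) r -> 0 < k -> 0 < size r -> 0 < dk r k.
Proof.
case: r => [|a t] //= /andP [Ha _]; case: k => // k _ _.
by rewrite /dk /= gcdn_gt0 Ha.
Qed.

Lemma dk_dvd r k i : i < k -> i < size r -> dk r k %| nth 0 r i.
Proof.
move=> Hik Hi; apply: gcd_seq_dvd.
rewrite -(nth_take 0 Hik); apply: mem_nth; rewrite size_take.
by case: ifP => _ //; lia.
Qed.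

Lemma ek_lcm r k : k < size r -> ek r k * nth 0 r k = lcmn (dk r k) (nth 0 r k).
Proof.
move=> Hk; rewrite /ek dkS // /lcmn divn_mulAC //; exact: dvdn_gcdl.
Qed.

Lemma frob r : all (fun x => 0 < x) r -> 0 < size r ->
  (forall k, k < size r -> gen (take k r) (lcmn (dk r k) (nth 0 r k))) ->
  forall j, j < size r -> forall n (b : nat -> nat), gen (take j.+1 r) n ->
  (forall i, 0 < i <= j -> b i < ek r i) -> b 0 = 0 ->
  n + nth 0 r 0 <> \sum_(i < j.+1) b i * nth 0 r i.
Proof.
move=> Hpos r0 Hfree.
have Hr0 : 0 < nth 0 r 0 by move/allP: Hpos; apply; exact: mem_nth.
elim => [|j IH] Hj n b Hn Hb Hb0.
  by rewrite big_ord_recr big_ord0 /= Hb0; lia.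
move: Hn; rewrite (take_nth 0 Hj) => /gen_rcons_inv [m [mu [Hm ->]]].
rewrite big_ord_recr /=.
set R := nth 0 r j.+1; set T := \sum_(i < j.+1) b i * nth 0 r i.
set D := dk r j.+1.
have D0 : 0 < D by apply: dk_pos.
have HDm : D %| m by apply: gen_dvd.
have HD0 : D %| nth 0 r 0 by apply: dk_dvd.
have HDT : D %| T.
  rewrite /T; apply: dvdn_sum => i _; apply: dvdn_mull; apply: dk_dvd => //.
  by have := ltn_ord i; lia.
move=> Heq.
have Hmod : mu * R = b j.+1 * R %[mod D].
  have E1 : m + mu * R + nth 0 r 0 = (m + nth 0 r 0) %/ D * D + mu * R.
    by rewrite divnK ?dvdn_add //; lia.
  have E2 : T + b j.+1 * R = T %/ D * D + b j.+1 * R by rewrite divnK.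
  by rewrite -(modnMDl ((m + nth 0 r 0) %/ D)) -E1 Heq E2 modnMDl.
have Hbj : b j.+1 < D %/ gcdn D R.
  by rewrite /D -dkS //; apply: Hb; lia.
have Hc := mod_cancel _ _ _ _ D0 Hbj Hmod.
have HeR : gen (take j.+1 r) (ek r j.+1 * R) by rewrite ek_lcm //; apply: Hfree.
apply: (IH (ltnW Hj) (m + mu %/ ek r j.+1 * (ek r j.+1 * R)) b) => //.
- by apply: gen_add => //; apply: gen_mul.
- by move=> i /andP [Hi Hij]; apply: Hb; rewrite Hi /=; lia.
- rewrite -dkS in Hc; last lia.
  have Hmu : mu = mu %/ ek r j.+1 * ek r j.+1 + b j.+1 by rewrite {1}(divn_eq mu (ek r j.+1)) -Hc.
  set q := mu %/ ek r j.+1 in Hmu *; set E := ek r j.+1 in Hmu *.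
  move: Heq; rewrite {1}Hmu mulnDl -mulnA => Heq'.
  rewrite -/T; clearbody q E R T; clear -Heq'; lia.
Qed.

Lemma expn_pow a h : expn a h = Nat.pow a h.
Proof. elim: h => //= h IH; by rewrite expnS IH. Qed.

Lemma real_part (h c : nat) : 5 * expn 4 h + 4 <= 3 * c + 9 * expn 2 h -> 1 <= h ->
  (INR h <= ln ((sqrt (INR (60 * c + 1)) + 9) / 10) / ln 2)%R.
Proof.
move=> H h1.
have HX : expn 4 h = expn 2 h * expn 2 h by rewrite -expnMn.
set X := expn 2 h in HX H.
have X2 : 2 <= X by rewrite /X -(expn1 2) leq_exp2l.
have Hn : (10 * X - 9) * (10 * X - 9) <= 60 * c + 1 by nia.
have HXr : INR (10 * X - 9) = (10 * INR X - 9)%R.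
  rewrite -[10 * X - 9]/((10 * X - 9)%coq_nat) minus_INR; last by apply/leP; lia.
  rewrite -[10 * X]/((10 * X)%coq_nat) mult_INR; simpl; lra.
have Hs : (10 * INR X - 9 <= sqrt (INR (60 * c + 1)))%R.
  rewrite -HXr -{1}(sqrt_square (INR (10 * X - 9))); last exact: pos_INR.
  apply: sqrt_le_1_alt; rewrite -mult_INR; apply: le_INR; apply/leP; exact: Hn.
have HXpow : INR X = (2 ^ h)%R by rewrite /X expn_pow pow_INR.
have ln2 : (0 < ln 2)%R by have := ln_lt_2; lra.
have HXpos : (0 < INR X)%R by apply: lt_0_INR; apply/ltP; lia.
have Hle : (ln (INR X) <= ln ((sqrt (INR (60 * c + 1)) + 9) / 10))%R.
  have : (INR X <= (sqrt (INR (60 * c + 1)) + 9) / 10)%R by lra.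
  case/Rle_lt_or_eq_dec => [Hlt|->]; last by apply: Rle_refl.
  by apply: Rlt_le; apply: ln_increasing.
rewrite HXpow ln_pow in Hle; last lra.
apply: (Rmult_le_reg_r (ln 2)) => //.
replace (ln ((sqrt (INR (60 * c + 1)) + 9) / 10) / ln 2 * ln 2)%R
  with (ln ((sqrt (INR (60 * c + 1)) + 9) / 10))%R by (field; lra).
exact: Hle.
Qed.
Lemma final_arith R0 Sh X Dh :
  3 * R0 + (5 * (X * X) + 1) * Dh <= 3 * Sh + 9 * X * Dh -> 1 <= Dh -> 2 <= X ->
  3 * R0 + 5 * (X * X) + 1 <= 3 * Sh + 9 * X.
Proof.
move=> H D1 X2.
have HZ9 : 9 * X <= 5 * (X * X) + 1 by nia.
have M6 : 9 * X * (Dh - 1) <= (5 * (X * X) + 1) * (Dh - 1) by apply: leq_mul.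
nia.
Qed.
Lemma final2 R0 Sh X c : 3 * R0 + 5 * (X * X) + 1 <= 3 * Sh + 9 * X -> 2 <= X ->
  R0 <= Sh /\ (Sh - R0 + 1 <= c -> 5 * (X * X) + 4 <= 3 * c + 9 * X).
Proof. move=> H X2; have HZ9 : 9 * X <= 5 * (X * X) + 1 by nia. split; lia. Qed.

Lemma step_arith R1 R2 R0 S1 P D' t Y Z Ek :
  10 * Y * (2 * D' + t) <= 3 * R1 + (2 * D' + t) ->
  3 * R0 + (5 * (4 * Y) + 1) * (2 * D' + t) <= 3 * S1 + 9 * Z * (2 * D' + t) ->
  Z * Z = 4 * Y -> 2 <= Z -> 1 <= Y ->
  Ek * R1 + D' <= R2 -> 2 * R1 <= Ek * R1 -> R2 <= P ->
  10 * (4 * Y) * D' <= 3 * R2 + D' /\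
  3 * R0 + (5 * (4 * (Z * Z)) + 1) * D' <= 3 * (S1 + P) + 9 * (2 * Z) * D'.
Proof.
move=> IH1 IH2 HZ Z2 Y1 Hab H2R HP.
have M5 : 2 * t <= 20 * (Y * t) by nia.
have HZ9 : 9 * Z <= 5 * (Z * Z) + 1 by nia.
have M6 : 9 * Z * t <= (5 * (Z * Z) + 1) * t by apply: leq_mul.
have M3 : Z * Z * D' = 4 * (Y * D') by rewrite HZ mulnA.
have M4 : Z * Z * t = 4 * (Y * t) by rewrite HZ mulnA.
split; nia.
Qed.

Theorem corollary5p4 (G : nat -> Prop) (r : seq nat) (c : nat) :
  numerical_semigroup G ->
  minimal_generating_system G r ->
  sorted ltn r ->
  plane_curve_gens r ->
  is_conductor G c ->
  2 <= (size r).-1 ->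
  (INR (size r).-1 <= ln ((sqrt (INR (60 * c + 1)) + 9) / 10) / ln 2)%R.
Proof.
move=> HG [Hiff Huniq Hpos Hmin] Hsort [[_ Hfr] Hineq] [Hc Hcmin] Hh.
set h := (size r).-1 in Hh Hineq *.
have Hsz : size r = h.+1 by rewrite /h; move: Hh; rewrite /h; case: (size r).
have Hfree := free_lcm _ Hfr Hpos.
have Hlt : forall i j, i < j -> j < size r -> nth 0 r i < nth 0 r j.
  move=> i j Hij Hj; apply: (sorted_ltn_nth ltn_trans 0 Hsort) => //.
  by rewrite inE; lia.
have r0 : 0 < size r by lia.
have Hdpos : forall k, 0 < k -> 0 < dk r k by move=> k Hk; apply: dk_pos.
have HDE : forall k, k < size r -> ek r k * dk r k.+1 = dk r k.
  by move=> k Hk; rewrite /ek divnK // dkS // dvdn_gcdl.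
have HE2 : forall k, 0 < k -> k < size r -> 2 <= ek r k.
  move=> k Hk0 Hk.
  have := HDE k Hk; have := Hdpos k Hk0; have := Hdpos k.+1 isT.
  case E : (ek r k) => [|[|e]]; [by move=> _ Hk' HDk; rewrite -HDk mul0n in Hk' | | by []].
  move=> _ _ _; exfalso.
  have Hg := Hfree k Hk; rewrite -ek_lcm // E mul1n in Hg.
  apply: (Hmin (nth 0 r k)); first exact: mem_nth.
  apply: gen_mono Hg => x Hx.
  rewrite (mem_rem_uniq _ Huniq) inE (mem_take Hx) andbT.
  have Hi := index_mem x (take k r); rewrite Hx size_takel ?(ltnW Hk) in Hi.
  have Hik : index x (take k r) < k by [].
  have := nth_index 0 Hx; rewrite nth_take // => <-.
  by rewrite neq_ltn Hlt.
  by [].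
pose S k := \sum_(i < k.+1) (ek r i).-1 * nth 0 r i.
have HS : forall k0, S k0.+1 = S k0 + (ek r k0.+1).-1 * nth 0 r k0.+1.
  by move=> k0; rewrite /S big_ord_recr.
have Hek0 : ek r 0 = 0 by rewrite /ek /dk take0 div0n.
have Hd1 : dk r 1 = nth 0 r 0 by rewrite dkS // /dk take0 gcd0n.
have L : forall j, j.+1 <= h ->
   10 * expn 4 j * dk r j.+2 <= 3 * nth 0 r j.+1 + dk r j.+2 /\
   3 * nth 0 r 0 + (5 * expn 4 j.+1 + 1) * dk r j.+2 <= 3 * S j.+1 + 9 * expn 2 j.+1 * dk r j.+2.
  elim => [|j IH] Hj.
    have HD2 : ek r 1 * dk r 2 = nth 0 r 0 by rewrite -Hd1; apply: HDE; lia.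
    have HE1 : 2 <= ek r 1 by apply: HE2 => //; lia.
    have Hdv : dk r 2 %| nth 0 r 1 by apply: dk_dvd => //; lia.
    have H01 : nth 0 r 0 < nth 0 r 1 by apply: Hlt => //; lia.
    have d2 := Hdpos 2 isT.
    set q := nth 0 r 1 %/ dk r 2.
    have Hq : nth 0 r 1 = q * dk r 2 by rewrite divnK.
    have Hq1 : ek r 1 < q by rewrite -(ltn_pmul2r d2) -Hq HD2.
    have Hq2 : ek r 1 * dk r 2 + dk r 2 <= q * dk r 2 by rewrite addnC -mulSn leq_mul2r Hq1 orbT.
    have HE1' : 2 * dk r 2 <= ek r 1 * dk r 2 by rewrite leq_mul2r HE1 orbT.
    have HP : nth 0 r 1 <= (ek r 1).-1 * nth 0 r 1 by apply: leq_pmull; lia.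
    rewrite HS /S big_ord1 Hek0 /= expn0 expn1.
    lia.
  have [IH1 IH2] := IH (ltnW Hj).
  set D := dk r j.+2 in IH1 IH2 *; set D' := dk r j.+3.
  have HD : ek r j.+2 * D' = D by apply: HDE; lia.
  have HE' : 2 <= ek r j.+2 by apply: HE2 => //; lia.
  have HEk : 2 <= ek r j.+1 by apply: HE2 => //; lia.
  have Hin : ek r j.+1 * nth 0 r j.+1 < nth 0 r j.+2 by apply: Hineq => //; lia.
  have d' := Hdpos j.+3 isT.
  have Hdv1 : D' %| nth 0 r j.+1 by apply: dk_dvd; lia.
  have Hdv2 : D' %| nth 0 r j.+2 by apply: dk_dvd; lia.
  set a := nth 0 r j.+1 %/ D' in Hin *; set bq := nth 0 r j.+2 %/ D' in Hin *.
  have Ha : nth 0 r j.+1 = a * D' by rewrite divnK.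
  have Hb : nth 0 r j.+2 = bq * D' by rewrite divnK.
  have Hab : ek r j.+1 * a < bq by rewrite -(ltn_pmul2r d') -mulnA -Ha -Hb.
  have Hab2 : ek r j.+1 * nth 0 r j.+1 + D' <= nth 0 r j.+2.
    by rewrite Ha Hb mulnA addnC -mulSn leq_mul2r Hab orbT.
  have H2R : 2 * nth 0 r j.+1 <= ek r j.+1 * nth 0 r j.+1 by rewrite leq_mul2r HEk orbT.
  have HP : nth 0 r j.+2 <= (ek r j.+2).-1 * nth 0 r j.+2 by apply: leq_pmull; lia.
  set t := (ek r j.+2 - 2) * D'.
  have HDt : D = 2 * D' + t.
    by rewrite -HD /t -{1}(subnK HE') mulnDl addnC.
  set Y := expn 4 j; set Z := expn 2 j.+1.
  have HZ : Z * Z = 4 * Y by rewrite /Z /Y -expnMn expnS.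
  have Z2 : 2 <= Z by rewrite /Z -(expn1 2) leq_exp2l.
  have Y1 : 1 <= Y by rewrite /Y expn_gt0.
  have H4 : expn 4 j.+1 = 4 * Y by rewrite expnS.
  have H4' : expn 4 j.+2 = 4 * (Z * Z) by rewrite expnS /Z -expnMn.
  have H2 : expn 2 j.+2 = 2 * Z by rewrite expnS.
  rewrite -/Z in IH2; rewrite H4 in IH2 *; rewrite H4' H2 HS.
  rewrite HDt in IH1 IH2.
  rewrite -/Y in IH1.
  exact: (step_arith _ _ _ _ _ _ _ _ _ _ IH1 IH2 HZ Z2 Y1 Hab2 H2R HP).
have Hh1 : h.-1.+1 = h by lia.
have [_ Lh] : _ /\ _ := L h.-1 ltac:(lia).
rewrite Hh1 in Lh.
set X := expn 2 h in Lh; set Dh := dk r h.+1 in Lh.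
have HX : expn 4 h = X * X by rewrite /X -expnMn.
have X4 : 2 <= X by rewrite /X -(expn1 2) leq_exp2l //; lia.
have dh : 1 <= Dh by apply: Hdpos.
rewrite HX in Lh.
have Hf := final_arith _ _ _ _ Lh dh X4.
have [HRS Hc3] := final2 _ _ _ c Hf X4.
have Hnot : ~ G (S h - nth 0 r 0).
  move/Hiff; rewrite -(take_oversize (n:=h.+1) (s:=r)) ?Hsz // => Hg.
  apply: (frob _ Hpos r0 Hfree h _ _ (fun i => (ek r i).-1) Hg).
  - lia.
  - by move=> i /andP [Hi0 Hi]; have := HE2 i Hi0 ltac:(lia); lia.
  - by rewrite Hek0.
  - by rewrite nth_take // subnK.
have Hcn : S h - nth 0 r 0 + 1 <= c.
  rewrite addn1 leqNgt; apply/negP => H; apply: Hnot; apply: Hc; by rewrite -ltnS.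
apply: real_part; last lia.
rewrite -/X HX; exact: Hc3 Hcn.
Qed.
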